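(* Let $\mathcal{R}=(G_0,e\to R)$ be an expanding replacement system with limit space $X$. Then the set of all rearrangements of $X$ is a group under composition.
   Context: A graph means a finite directed multigraph (loops and multiple edges allowed). A replacement system $\mathcal{R}=(G_0,e\to R)$ consists of a graph $G_0$ (the base graph) and a replacement rule $e\to R$, where $e$ is a single non-loop directed edge from a vertex $v$ to a vertex $w$, and $R$ is a graph containing $v$ and $w$ (the initial and terminal vertices of $R$; the other vertices of $R$ are interior). Replacing an edge $\varepsilon$ of a graph $G$ means deleting $\varepsilon$ and gluing in a copy of $R$, identifying the initial (resp. terminal) vertex of $R$ with the initial (resp. terminal) vertex of $\varepsilon$; the new edges are named $\varepsilon\zeta$ for edges $\zeta$ of $R$. The full expansion sequence is $G_0,G_1,\dots$, where $G_n$ is obtained from $G_{n-1}$ by replacing every edge; thus the edges of $G_n$ are the words $\varepsilon_0\varepsilon_1\cdots\varepsilon_n$ with $\varepsilon_0$ an edge of $G_0$ and $\varepsilon_i$ edges of $R$. $\mathcal{R}$ is expanding if (i) neither $G_0$ nor $R$ has isolated vertices, (ii) the initial and terminal vertices of $R$ are not joined by an edge, (iii) $R$ has at least three vertices and two edges. The symbol space is $\Omega=E(G_0)\times E(R)^{\mathbb{N}}$ with the product topology; two sequences $\varepsilon_0\varepsilon_1\cdots$ and $\varepsilon_0'\varepsilon_1'\cdots$ are glued if for every $n$ the edges $\varepsilon_0\cdots\varepsilon_n$ and $\varepsilon_0'\cdots\varepsilon_n'$ of $G_n$ share at least one vertex; for expanding systems this is an equivalence relation $\sim$ and the limit space is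 $X=\Omega/\sim$. For an edge $e'=\varepsilon_0\cdots\varepsilon_n$ of $G_n$, the cell $C(e')$ is the image in $X$ of the set of sequences with prefix $e'$; its boundary points are the images of the endpoints of $e'$ (a vertex $u$ of some $G_n$ corresponds to the point of $X$ that is the image of any sequence $\varepsilon_0\varepsilon_1\cdots$ such that $\varepsilon_0\cdots\varepsilon_k$ is incident on $u$ for all large $k$), and its interior is the cell minus its boundary points. If $e',e''$ are both loops or both non-loops, the canonical homeomorphism $C(e')\to C(e'')$ is the map induced by $e'\zeta_1\zeta_2\cdots\mapsto e''\zeta_1\zeta_2\cdots$. A cellular partition of $X$ is a cover of $X$ by finitely many cells with pairwise disjoint interiors. A rearrangement of $X$ is a homeomorphism $f\colon X\to X$ such that for some cellular partition $\mathcal{P}$, $f$ restricts to a canonical homeomorphism on each cell of $\mathcal{P}$. *)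

(* Defs.v *)
From mathcomp Require Import all_boot.
Set Implicit Arguments. Unset Strict Implicit. Unset Printing Implicit Defensive.

Record graph := Graph {
  gV : finType;
  gE : finType;
  gsrc : gE -> gV;
  gtgt : gE -> gV }.

(* A replacement system (G0, e -> R): base graph G0, replacement graph R with
   initial vertex rinit and terminal vertex rterm (the endpoints of e). *)
Record repl_sys := ReplSys {
  G0 : graph;
  RG : graph;
  rinit : gV RG;
  rterm : gV RG }.

Definition no_isolated (G : graph) : Prop :=
  forall v : gV G, exists z : gE G, gsrc z = v \/ gtgt z = v.

Definition expanding (RS : repl_sys) : Prop :=
  [/\ no_isolated (G0 RS) /\ no_isolated (RG RS),
      rinit RS <> rterm RS,
      (forall z : gE (RG RS),
         ~ (gsrc z = rinit RS /\ gtgt z = rterm RS) /\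
         ~ (gsrc z = rterm RS /\ gtgt z = rinit RS)),
      2 < #|gV (RG RS)| & 1 < #|gE (RG RS)| ].

Section Limit.
Variable RS : repl_sys.

Notation E0 := (gE (G0 RS)).
Notation ER := (gE (RG RS)).
Notation VR := (gV (RG RS)).

(* Vertices of all the G_n: base vertices, or an interior vertex u of the copy of
   R glued in when replacing the edge (e0, p) = e0 p_1 ... p_k of G_k. *)
Inductive vtx : Type :=
  | VBase of gV (G0 RS)
  | VInt of E0 & seq ER & VR.

(* Edges of G_n: words e0 e1 ... en, represented as (e0, [:: e1; ...; en]). *)
Definition edge : Type := (E0 * seq ER)%type.

Definition vmap (e0 : E0) (p : seq ER) (st : vtx * vtx) (u : VR) : vtx :=
  if u == rinit RS then st.1 else if u == rterm RS then st.2 else VInt e0 p u.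

Fixpoint ends_aux (e0 : E0) (pre : seq ER) (st : vtx * vtx) (s : seq ER)
  : vtx * vtx :=
  match s with
  | [::] => st
  | z :: s' => ends_aux e0 (rcons pre z)
                 (vmap e0 pre st (gsrc z), vmap e0 pre st (gtgt z)) s'
  end.

(* (initial vertex, terminal vertex) of the edge (e0, s) of G_(size s). *)
Definition ends (e : edge) : vtx * vtx :=
  ends_aux e.1 [::] (VBase (gsrc e.1), VBase (gtgt e.1)) e.2.

Definition Omega : Type := (E0 * (nat -> ER))%type.

Definition prefix (w : Omega) (n : nat) : edge := (w.1, mkseq w.2 n).

Definition share (a b : vtx * vtx) : Prop :=
  a.1 = b.1 \/ a.1 = b.2 \/ a.2 = b.1 \/ a.2 = b.2.

Definition glued (w w' : Omega) : Prop :=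
  forall n, share (ends (prefix w n)) (ends (prefix w' n)).

(* limit space X = Omega / glued (glued is an equivalence relation for
   expanding systems); points are the equivalence classes. *)
Definition X : Type := {A : Omega -> Prop | exists w, A = glued w}.

Definition proj (w : Omega) : X := exist _ (glued w) (ex_intro _ w erefl).

(* product topology on Omega (all factors finite discrete) *)
Definition open_Omega (S : Omega -> Prop) : Prop :=
  forall w, S w -> exists n, forall w', w'.1 = w.1 ->
    (forall i, i < n -> w'.2 i = w.2 i) -> S w'.

Definition open_X (U : X -> Prop) : Prop := open_Omega (fun w => U (proj w)).

Definition continuous_X (f : X -> X) : Prop :=
  forall U, open_X U -> open_X (fun x => U (f x)).

Definition homeomorphism_X (f : X -> X) : Prop :=
  exists g : X -> X, [/\ cancel f g, cancel g f, continuous_X f & continuous_X g].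

Definition ext (e : edge) (zeta : nat -> ER) : Omega :=
  (e.1, fun i => if i < size e.2 then nth (zeta 0) e.2 i else zeta (i - size e.2)).

Definition cell (e : edge) (x : X) : Prop := exists zeta, x = proj (ext e zeta).

Definition incident (u : vtx) (st : vtx * vtx) : Prop := u = st.1 \/ u = st.2.

Definition vertex_point (u : vtx) (x : X) : Prop :=
  exists w, x = proj w /\
    exists N, forall k, N <= k -> incident u (ends (prefix w k)).

Definition cell_boundary (e : edge) (x : X) : Prop :=
  vertex_point (ends e).1 x \/ vertex_point (ends e).2 x.

Definition cell_interior (e : edge) (x : X) : Prop :=
  cell e x /\ ~ cell_boundary e x.

Definition is_loop (e : edge) : Prop := (ends e).1 = (ends e).2.

Definition cellular_partition (P : seq edge) : Prop :=
  [/\ uniq P,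
      (forall x, exists2 e, e \in P & cell e x) &
      (forall e e', e \in P -> e' \in P -> e <> e' ->
         forall x, ~ (cell_interior e x /\ cell_interior e' x))].

Definition rearrangement (f : X -> X) : Prop :=
  homeomorphism_X f /\
  exists P, cellular_partition P /\
    forall e, e \in P -> exists e' : edge,
      (is_loop e <-> is_loop e') /\
      forall zeta, f (proj (ext e zeta)) = proj (ext e' zeta).

End Limit.

(* Main.v *)
Require Import Defs.
From mathcomp Require Import all_boot.
From Stdlib Require Import Classical FunctionalExtensionality ProofIrrelevance.
From mathcomp Require Import zify.
Set Implicit Arguments. Unset Strict Implicit. Unset Printing Implicit Defensive.

Section Work.
Variable RS : repl_sys.
Notation E0 := (gE (G0 RS)).
Notation ER := (gE (RG RS)).
Notation VR := (gV (RG RS)).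
Notation V := (vtx RS).
Notation ri := (rinit RS).
Notation rt := (rterm RS).

Definition lev (u : V) : nat :=
  match u with VBase _ => 0 | VInt _ p _ => (size p).+1 end.

Lemma ends_aux_rcons (e0 : E0) (s : seq ER) (z : ER) : forall pre st,
  @ends_aux RS e0 pre st (rcons s z) =
  (vmap e0 (pre ++ s) (ends_aux e0 pre st s) (gsrc z),
   vmap e0 (pre ++ s) (ends_aux e0 pre st s) (gtgt z)).
Proof.
elim: s => [|y s IH] pre st /=; first by rewrite cats0.
by rewrite IH cat_rcons.
Qed.

Lemma ends_rcons (e0 : E0) (s : seq ER) (z : ER) :
  ends ((e0, rcons s z) : edge RS) =
  (vmap e0 s (ends ((e0, s) : edge RS)) (gsrc z),
   vmap e0 s (ends ((e0, s) : edge RS)) (gtgt z)).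
Proof. by rewrite /ends /= ends_aux_rcons. Qed.

Definition good (e0 : E0) (s : seq ER) (u : V) : Prop :=
  u = VBase (gsrc e0) \/ u = VBase (gtgt e0) \/
  exists j r, j < size s /\ u = VInt e0 (take j s) r.

Lemma vmap_cases (e0 : E0) (s : seq ER) (st : V * V) (r : VR) :
  vmap e0 s st r = st.1 \/ vmap e0 s st r = st.2 \/ vmap e0 s st r = VInt e0 s r.
Proof. rewrite /vmap; case: ifP => _; first by left. case: ifP => _; by auto. Qed.

Lemma ends_struct (e0 : E0) (s : seq ER) (u : V) :
  incident u (ends ((e0, s) : edge RS)) -> good e0 s u.
Proof.
elim/last_ind: s u => [|s z IH] u.
  by rewrite /ends /= /incident /good /= => -[->|->]; auto.
have Hg : forall v, incident v (ends ((e0, s) : edge RS)) -> good e0 (rcons s z) v.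
  move=> v /IH [->|[->|[j [r [Hj ->]]]]]; [by left|by right;left|].
  right; right; exists j, r; split; first by rewrite size_rcons ltnS ltnW.
  by rewrite -cats1 takel_cat // ltnW.
have Hn : forall r, good e0 (rcons s z) (VInt e0 s r).
  move=> r; right; right; exists (size s), r; split; first by rewrite size_rcons.
  by rewrite -cats1 take_size_cat.
rewrite ends_rcons /incident /= => -[->|->];
 (case: (vmap_cases e0 s (ends ((e0, s) : edge RS)) (gsrc z)) => [->|[->|->]] ||
  case: (vmap_cases e0 s (ends ((e0, s) : edge RS)) (gtgt z)) => [->|[->|->]]);
 try (apply: Hg; rewrite /incident; by auto); by apply: Hn.
Qed.

Lemma good_lev (e0 : E0) (s : seq ER) (u : V) : good e0 s u -> lev u <= size s.
Proof.
move=> [->|[->|[j [r [Hj ->]]]]] //=.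
by rewrite size_take Hj.
Qed.

Lemma ends_lev (e : edge RS) u : incident u (ends e) -> lev u <= size e.2.
Proof. case: e => e0 s /= H; exact: good_lev (ends_struct H). Qed.

Lemma ends_lev1 (e : edge RS) : lev (ends e).1 <= size e.2.
Proof. apply: ends_lev; by left. Qed.
Lemma ends_lev2 (e : edge RS) : lev (ends e).2 <= size e.2.
Proof. apply: ends_lev; by right. Qed.


Lemma vmap_eq (e0 : E0) (s : seq ER) (st : V * V) (x y : VR) :
  lev st.1 <= size s -> lev st.2 <= size s ->
  vmap e0 s st x = vmap e0 s st y ->
  x = y \/ (x = ri /\ y = rt) \/ (x = rt /\ y = ri).
Proof.
move=> h1 h2; rewrite /vmap.
case: (x =P ri) => [->|hx1]; case: (y =P ri) => [->|hy1]; try by left.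
- case: (y =P rt) => [->|hy2]; first by right; left.
  by move=> E; move: h1; rewrite E /= ltnn.
- case: (x =P rt) => [->|hx2]; first by right; right.
  by move=> E; move: h1; rewrite -E /= ltnn.
- case: (x =P rt) => [->|hx2]; case: (y =P rt) => [->|hy2]; try by left.
  + by move=> E; move: h2; rewrite E /= ltnn.
  + by move=> E; move: h2; rewrite -E /= ltnn.
  + by case=> ->; left.
Qed.

Lemma vmap_old (e0 : E0) (s : seq ER) (st : V * V) (r : VR) :
  lev (vmap e0 s st r) <= size s -> r = ri \/ r = rt.
Proof.
rewrite /vmap; case: (r =P ri) => [->|_]; first by left.
case: (r =P rt) => [->|_]; first by right.
by rewrite /= ltnn.
Qed.

Hypothesis HE : expanding RS.

Lemma no_it (z : ER) : ~ (gsrc z = ri /\ gtgt z = rt) /\ ~ (gsrc z = rt /\ gtgt z = ri).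
Proof. by case: HE => _ _ H _ _; apply: H. Qed.

Lemma loop_child (e0 : E0) (s : seq ER) (z : ER) :
  is_loop ((e0, rcons s z) : edge RS) <-> gsrc z = gtgt z.
Proof.
rewrite /is_loop ends_rcons /=; split; last by move=> ->.
move/vmap_eq; rewrite !ends_lev1 !ends_lev2 => /(_ isT isT).
have := no_it z; tauto.
Qed.

Lemma no_two_old (e0 : E0) (s : seq ER) (z : ER) :
  let c := ends ((e0, rcons s z) : edge RS) in
  lev c.1 <= size s -> lev c.2 <= size s -> c.1 <> c.2 -> False.
Proof.
rewrite /= ends_rcons /= => h1 h2 hne.
have [a1|a1] := vmap_old h1; have [a2|a2] := vmap_old h2;
  move: (no_it z) => nz; try tauto; apply: hne; by rewrite a1 a2.
Qed.

Inductive tag := TI | TT | TN.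
Definition tv (t : tag * tag) (u : VR) : tag :=
  if u == ri then t.1 else if u == rt then t.2 else TN.
Definition tags (tau : seq ER) : tag * tag :=
  foldl (fun t z => (tv t (gsrc z), tv t (gtgt z))) (TI, TT) tau.
Definition interp (e : edge RS) (t : tag) (u : V) : Prop :=
  match t with TI => u = (ends e).1 | TT => u = (ends e).2 | TN => size e.2 < lev u end.

Lemma interp_step (e : edge RS) (tau : seq ER) (T : tag * tag) (st : V * V) (r : VR) :
  interp e T.1 st.1 -> interp e T.2 st.2 ->
  interp e (tv T r) (vmap e.1 (e.2 ++ tau) st r).
Proof.
move=> h1 h2; rewrite /tv /vmap.
case: (r == ri) => //; case: (r == rt) => //=.
by rewrite size_cat ltnS leq_addr.
Qed.

Lemma tags_spec (e : edge RS) (tau : seq ER) :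
  interp e (tags tau).1 (ends ((e.1, e.2 ++ tau) : edge RS)).1 /\
  interp e (tags tau).2 (ends ((e.1, e.2 ++ tau) : edge RS)).2.
Proof.
elim/last_ind: tau => [|tau z [IH1 IH2]].
  by case: e => e0 s; rewrite /= cats0.
rewrite /tags foldl_rcons -/(tags tau) -rcons_cat ends_rcons /=.
split; exact: interp_step.
Qed.

Definition hit1 (L : Prop) (t : tag) : Prop := t = TI \/ (L /\ t = TT).
Definition hit2 (L : Prop) (t : tag) : Prop := t = TT \/ (L /\ t = TI).

Lemma interp_hit1 (e : edge RS) t c :
  interp e t c -> ((ends e).1 = c <-> hit1 (is_loop e) t).
Proof.
rewrite /hit1 /is_loop; case: t => /= [->|->|h].
- by split; auto.
- by split; [move=> ->; right | case=> [//|[]]].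
- split=> [E|]; last by case=> [//|[_ //]].
  by move: h; rewrite -E ltnNge ends_lev1.
Qed.

Lemma interp_hit2 (e : edge RS) t c :
  interp e t c -> ((ends e).2 = c <-> hit2 (is_loop e) t).
Proof.
rewrite /hit2 /is_loop; case: t => /= [->|->|h].
- by split; [move=> <-; right | case=> [//|[]]].
- by split; auto.
- split=> [E|]; last by case=> [//|[_ //]].
  by move: h; rewrite -E ltnNge ends_lev2.
Qed.

Lemma inc_tags1 (e : edge RS) (tau : seq ER) :
  incident (ends e).1 (ends ((e.1, e.2 ++ tau) : edge RS)) <->
  hit1 (is_loop e) (tags tau).1 \/ hit1 (is_loop e) (tags tau).2.
Proof.
have [h1 h2] := tags_spec e tau.
rewrite /incident -(interp_hit1 h1) -(interp_hit1 h2); split; case; auto.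
Qed.

Lemma inc_tags2 (e : edge RS) (tau : seq ER) :
  incident (ends e).2 (ends ((e.1, e.2 ++ tau) : edge RS)) <->
  hit2 (is_loop e) (tags tau).1 \/ hit2 (is_loop e) (tags tau).2.
Proof.
have [h1 h2] := tags_spec e tau.
rewrite /incident -(interp_hit2 h1) -(interp_hit2 h2); split; case; auto.
Qed.

Lemma inc_transport (a b : edge RS) (tau : seq ER) :
  (is_loop a <-> is_loop b) ->
  (incident (ends a).1 (ends ((a.1, a.2 ++ tau) : edge RS)) ->
   incident (ends b).1 (ends ((b.1, b.2 ++ tau) : edge RS))) /\
  (incident (ends a).2 (ends ((a.1, a.2 ++ tau) : edge RS)) ->
   incident (ends b).2 (ends ((b.1, b.2 ++ tau) : edge RS))).
Proof.
move=> hL; rewrite !inc_tags1 !inc_tags2 /hit1 /hit2.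
split; case: (tags tau) => t1 t2 /=; tauto.
Qed.

Lemma loop_transport (a b : edge RS) (tau : seq ER) :
  (is_loop a <-> is_loop b) ->
  (is_loop ((a.1, a.2 ++ tau) : edge RS) <-> is_loop ((b.1, b.2 ++ tau) : edge RS)).
Proof.
case/lastP: tau => [|tau z].
  by case: a => ? ?; case: b => ? ?; rewrite /= !cats0.
by move=> _; rewrite -!rcons_cat !loop_child.
Qed.


Definition scat (s : seq ER) (z : nat -> ER) : nat -> ER :=
  fun i => if i < size s then nth (z 0) s i else z (i - size s).

Definition agree (v w : Omega RS) (d : nat) : Prop :=
  v.1 = w.1 /\ forall i, i < d -> v.2 i = w.2 i.

Notation pfx := (@Defs.prefix RS).

Lemma ext_E (e : edge RS) z : ext e z = (e.1, scat e.2 z).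
Proof. by []. Qed.

Lemma mkseq_scat (s : seq ER) z m : mkseq (scat s z) (size s + m) = s ++ mkseq z m.
Proof.
elim: m => [|m IH].
  rewrite addn0 cats0; apply: (@eq_from_nth _ (z 0)); rewrite ?size_mkseq // => i hi.
  by rewrite nth_mkseq // /scat hi.
rewrite addnS !mkseqS IH rcons_cat /scat.
have -> : (size s + m < size s) = false by lia.
by rewrite addKn.
Qed.

Lemma prefix_ext (e : edge RS) z m : pfx (ext e z) (size e.2 + m) = (e.1, e.2 ++ mkseq z m).
Proof. by rewrite /Defs.prefix /= mkseq_scat. Qed.

Lemma prefix_ext0 (e : edge RS) z : pfx (ext e z) (size e.2) = e.
Proof. by have := prefix_ext e z 0; rewrite addn0 cats0; case: e. Qed.

Lemma ext_cat (e : edge RS) t z : ext (e.1, e.2 ++ t) z = ext e (scat t z).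
Proof.
rewrite /ext /=; congr pair; apply: functional_extensionality => i.
rewrite /scat size_cat nth_cat.
case: (ltnP i (size e.2)) => h1.
  have -> : i < size e.2 + size t by lia.
  exact: set_nth_default.
have -> : (i - size e.2 < size t) = (i < size e.2 + size t) by lia.
case: ifP => // _; by rewrite subnDA.
Qed.

Lemma scat_split z K : scat (mkseq z K) (fun i => z (i + K)) = z.
Proof.
apply: functional_extensionality => i; rewrite /scat size_mkseq.
case: ifP => h; first by rewrite nth_mkseq.
by rewrite subnK //; lia.
Qed.

Lemma ext_split (e : edge RS) z K :
  ext e z = ext (e.1, e.2 ++ mkseq z K) (fun i => z (i + K)).
Proof. by rewrite ext_cat scat_split. Qed.

Lemma ext_nil (w : Omega RS) : ext (w.1, [::]) w.2 = w.
Proof.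
case: w => a f; rewrite /ext /=; congr pair; apply: functional_extensionality => i.
by rewrite subn0.
Qed.

Lemma take_mkseq (f : nat -> ER) j k : j <= k -> take j (mkseq f k) = mkseq f j.
Proof.
move=> hjk; apply: (@eq_from_nth _ (f 0)); rewrite ?size_takel ?size_mkseq //.
move=> i hi; rewrite nth_take // !nth_mkseq //; lia.
Qed.

Lemma prefix_agree v w d : agree v w d -> pfx v d = pfx w d.
Proof.
case=> h1 h2; rewrite /Defs.prefix h1; congr pair.
apply: (@eq_from_nth _ (w.2 0)); rewrite ?size_mkseq // => i hi.
by rewrite !nth_mkseq // h2.
Qed.

Lemma prefixS (v : Omega RS) k : pfx v k.+1 = (v.1, rcons (mkseq v.2 k) (v.2 k)).
Proof. by rewrite /Defs.prefix mkseqS. Qed.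

Lemma size_pfx (v : Omega RS) k : size (pfx v k).2 = k.
Proof. by rewrite size_mkseq. Qed.

Lemma pfx_VInt (v : Omega RS) k u e0 p r :
  incident u (ends (pfx v k)) -> u = VInt e0 p r ->
  [/\ e0 = v.1, size p < k & p = mkseq v.2 (size p)].
Proof.
move=> /ends_struct [->|[->|[j [r' [hj ->]]]]] // [<- <- _].
rewrite size_mkseq in hj.
rewrite take_mkseq ?size_mkseq //; last by lia.
Qed.

Lemma shared_agree (v w : Omega RS) k u m :
  incident u (ends (pfx v k)) -> incident u (ends (pfx w k)) ->
  m < lev u -> agree v w m.
Proof.
case: u => [b|e0 p r] hv hw //= hm.
have [h1 h2 h3] := pfx_VInt hv erefl.
have [h1' h2' h3'] := pfx_VInt hw erefl.
split; first by rewrite -h1 h1'.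
move=> i hi; have hip : i < size p by lia.
by rewrite -(nth_mkseq (v.2 0) v.2 hip) -h3 h3' nth_mkseq.
Qed.

Lemma DCiter (v : Omega RS) u j k :
  incident u (ends (pfx v k)) -> lev u <= j -> j <= k -> incident u (ends (pfx v j)).
Proof.
elim: k => [|k IH] hi hl hjk.
  by have -> : j = 0 by lia.
case: (ltnP j k.+1) => hj; last by have -> : j = k.+1 by lia.
have hjk' : j <= k by lia.
apply: (IH _ hl hjk').
move: hi; rewrite prefixS ends_rcons /incident /= -/(pfx v k).
rewrite /Defs.prefix.
set st := ends _.
have H : forall r, u = vmap v.1 (mkseq v.2 k) st r -> u = st.1 \/ u = st.2.
  move=> r; case: (vmap_cases v.1 (mkseq v.2 k) st r) => [->|[->|->]]; auto.
  move=> E; move: hl; rewrite E /= size_mkseq; lia.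
by case=> /H.
Qed.

Lemma proj_glued (w w' : Omega RS) : proj w = proj w' -> glued w w'.
Proof.
move=> E; have : glued w = glued w' by move: (f_equal (@proj1_sig _ _) E).
move=> ->; move=> n; rewrite /share; by left.
Qed.

Lemma X_proj (x : X RS) : exists w, x = proj w.
Proof.
case: x => A HA; have HA' := HA; case: HA' => w E; subst A.
exists w; rewrite /proj; congr exist; exact: proof_irrelevance.
Qed.

Lemma share_inc (A B : V * V) : share A B -> exists u, incident u A /\ incident u B.
Proof. rewrite /share /incident; case: A B => a1 a2 [b1 b2] /=; firstorder. Qed.


Definition both (v w : Omega RS) (u : V) (k : nat) : Prop :=
  incident u (ends (pfx v k)) /\ incident u (ends (pfx w k)).

Lemma Conv (v w : Omega RS) D : glued v w -> ~ agree v w D ->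
  exists u, lev u <= D /\ forall k, D <= k -> both v w u k.
Proof.
move=> hg hna.
set a := (ends (pfx v D)).1; set b := (ends (pfx v D)).2.
have levab : lev a <= D /\ lev b <= D.
  by rewrite /a /b; split; [have := ends_lev1 (pfx v D) | have := ends_lev2 (pfx v D)];
     rewrite size_pfx.
have key : forall k, D <= k -> both v w a k \/ both v w b k.
  move=> k hk; have [u [hu1 hu2]] := share_inc (hg k).
  have hl : lev u <= D.
    rewrite leqNgt; apply/negP => h; apply: hna; exact: shared_agree hu1 hu2 h.
  have := DCiter hu1 hl hk; rewrite /incident -/a -/b => -[E|E]; subst u.
    by left. by right.
have down : forall c k k', lev c <= D -> D <= k -> k <= k' -> both v w c k' -> both v w c k.
  move=> c k k' hc hk hkk' [h1 h2]; split; apply: (DCiter _ _ hkk') => //; lia.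
case: (classic (forall N, exists k, N <= k /\ both v w a k)) => [hinf|hfin].
  exists a; split; first by case: levab.
  move=> k hk; have [k' [hk' hb]] := hinf k.
  exact: (down a k k' (proj1 levab) hk hk' hb).
have [N hN] : exists N, forall k, N <= k -> ~ both v w a k.
  apply: NNPP => hne; apply: hfin => N; apply: NNPP => hne2; apply: hne; exists N.
  by move=> k hk hb; apply: hne2; exists k.
exists b; split; first by case: levab.
move=> k hk; have hk' : k <= maxn k N by lia.
have hD : D <= maxn k N by lia.
apply: (down b k (maxn k N) (proj2 levab) hk hk').
case: (key _ hD) => // hb; exfalso; apply: (hN (maxn k N)) => //; lia.
Qed.

Lemma Stab (v w : Omega RS) u N : glued v w ->
  (forall k, N <= k -> incident u (ends (pfx w k))) ->
  exists N', forall k, N' <= k -> incident u (ends (pfx v k)).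
Proof.
move=> hg hw.
case: (classic (forall D, agree v w D)) => [hall|].
  exists N => k hk; rewrite (prefix_agree (hall k)); exact: hw.
move=> /not_all_ex_not [D hD].
have [u' [hl' hb]] := Conv hg hD.
case: (classic (u' = u)) => [<-|hne].
  by exists D => k hk; case: (hb k hk).
exfalso.
set k := maxn N D.
have hu : incident u (ends (pfx w k.+1)) by apply: hw; lia.
have hu' : incident u' (ends (pfx w k.+1)) by case: (hb k.+1) => //; lia.
have hlu : lev u <= k.
  have := ends_lev (hw N (leqnn N)); rewrite size_pfx; lia.
move: hu hu'; rewrite prefixS.
have := @no_two_old w.1 (mkseq w.2 k) (w.2 k).
rewrite /= size_mkseq /incident.
case: (ends _) => c1 c2 /= H [E1|E1] [E2|E2]; subst; try by apply: hne.
all: apply: H; [lia | lia | congruence].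
Qed.

Lemma bd_from_inc (e : edge RS) z u N :
  (forall k, N <= k -> incident u (ends (pfx (ext e z) k))) ->
  lev u <= size e.2 -> cell_boundary e (proj (ext e z)).
Proof.
move=> hi hl.
have h0 : incident u (ends e).
  rewrite -(prefix_ext0 e z); apply: (DCiter (hi (maxn N (size e.2)) _)) => //; lia.
have vp : vertex_point u (proj (ext e z)) by exists (ext e z); split => //; exists N.
by rewrite /cell_boundary; case: h0 => <-; [left|right].
Qed.

Lemma boundary_D (a b : edge RS) z z' D :
  proj (ext a z) = proj (ext b z') -> ~ agree (ext a z) (ext b z') D ->
  D <= size a.2 -> cell_boundary a (proj (ext a z)).
Proof.
move=> E hna hD.
have [u [hl hb]] := Conv (proj_glued E) hna.
apply: (@bd_from_inc a z u D); first by move=> k hk; case: (hb k hk).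
lia.
Qed.

Lemma vp_stab (e : edge RS) z u :
  vertex_point u (proj (ext e z)) ->
  exists N, forall k, N <= k -> incident u (ends (pfx (ext e z) k)).
Proof.
case=> w [E [N hN]]; exact: (Stab (proj_glued E) hN).
Qed.

Lemma bd_sub (a : edge RS) t z :
  cell_boundary a (proj (ext (a.1, a.2 ++ t) z)) ->
  cell_boundary (a.1, a.2 ++ t) (proj (ext (a.1, a.2 ++ t) z)).
Proof.
move=> hb.
have [u [hl hvp]] : exists u, lev u <= size a.2 /\ vertex_point u (proj (ext (a.1, a.2 ++ t) z)).
  case: hb => h; [exists (ends a).1 | exists (ends a).2]; split => //;
    [exact: ends_lev1 | exact: ends_lev2].
have [N hN] := vp_stab hvp.
have hl2 : lev u <= size (a.1, a.2 ++ t).2 by rewrite /= size_cat; lia.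
exact: (@bd_from_inc (a.1, a.2 ++ t) z u N hN hl2).
Qed.

Lemma bd_transport (a c : edge RS) z :
  (is_loop a <-> is_loop c) ->
  cell_boundary a (proj (ext a z)) -> cell_boundary c (proj (ext c z)).
Proof.
move=> hL hb.
have key : forall i : bool,
    vertex_point (if i then (ends a).1 else (ends a).2) (proj (ext a z)) ->
    vertex_point (if i then (ends c).1 else (ends c).2) (proj (ext c z)).
  move=> i hv; have [N hN] := vp_stab hv.
  exists (ext c z); split => //; exists (size c.2 + N) => k hk.
  have -> : k = size c.2 + (k - size c.2) by lia.
  rewrite prefix_ext.
  have := hN (size a.2 + (k - size c.2)) ltac:(lia).
  rewrite prefix_ext.
  case: i hv hN => _ _.
  - exact: (proj1 (inc_transport (mkseq z (k - size c.2)) hL)).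
  - exact: (proj2 (inc_transport (mkseq z (k - size c.2)) hL)).
case: hb => h; [left; exact: (key true h) | right; exact: (key false h)].
Qed.


Lemma ri_rt : ri <> rt.
Proof. by case: HE. Qed.

Lemma interior_v : exists r : VR, r <> ri /\ r <> rt.
Proof.
apply: NNPP => hn.
have hsub : [set: VR] \subset [set ri; rt].
  apply/subsetP => r _; rewrite !inE.
  case: (r =P ri) => // h1; case: (r =P rt) => // h2.
  by exfalso; apply: hn; exists r.
have := subset_leq_card hsub; rewrite cardsT cards2.
case: HE => _ _ _ h3 _; move: h3; case: (ri != rt) => /=; lia.
Qed.

Lemma edge_at (r : VR) : exists z : ER, gsrc z = r \/ gtgt z = r.
Proof. case: HE => [[_ h]] _ _ _ _; exact: h. Qed.

Lemma tv_TN1 (T : tag * tag) (x : VR) : x <> rt -> T.1 = TN -> tv T x = TN.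
Proof. by rewrite /tv => h1 h2; case: eqP => // _; case: eqP. Qed.
Lemma tv_TN2 (T : tag * tag) (x : VR) : x <> ri -> T.2 = TN -> tv T x = TN.
Proof. by rewrite /tv => h1 h2; case: eqP => // _; case: eqP. Qed.
Lemma tv_int (T : tag * tag) (x : VR) : x <> ri -> x <> rt -> tv T x = TN.
Proof. by rewrite /tv => h1 h2; case: eqP => // _; case: eqP. Qed.

Lemma tags_NN : exists tau, size tau = 2 /\ tags tau = (TN, TN).
Proof.
have [r [hr1 hr2]] := interior_v.
have [z1 hz1] := edge_at r.
have [za hza] := edge_at ri.
have [zb hzb] := edge_at rt.
have nri := ri_rt.
set T1 := (tv (TI, TT) (gsrc z1), tv (TI, TT) (gtgt z1)).
case: (classic (T1.2 = TN)) => h2.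
  exists [:: z1; zb]; split => //; rewrite /tags /= -/T1.
  have nz := no_it zb.
  have a1 : gsrc zb <> ri by move=> E; case: hzb => E'; [congruence|tauto].
  have a2 : gtgt zb <> ri by move=> E; case: hzb => E'; [tauto|congruence].
  by rewrite !tv_TN2.
have h1 : T1.1 = TN.
  case: hz1 => E; first by rewrite /T1 /= E tv_int.
  by exfalso; apply: h2; rewrite /T1 /= E tv_int.
exists [:: z1; za]; split => //; rewrite /tags /= -/T1.
have nz := no_it za.
have a1 : gsrc za <> rt by move=> E; case: hza => E'; [congruence|tauto].
have a2 : gtgt za <> rt by move=> E; case: hza => E'; [tauto|congruence].
by rewrite !tv_TN1.
Qed.

Lemma PL (P : seq (edge RS)) : cellular_partition P ->
  forall w : Omega RS, exists2 p, p \in P & p.1 = w.1 /\ p.2 = mkseq w.2 (size p.2).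
Proof.
case=> _ hcov _ w.
set n := \max_(p <- P) size p.2.
have hn : forall p, p \in P -> size p.2 <= n.
  by move=> p hp; apply: (@leq_bigmax_seq _ _ xpredT (fun p : edge RS => size p.2)).
have [tau [hsz htg]] := tags_NN.
set e : edge RS := (w.1, mkseq w.2 n).
set v := ext (e.1, e.2 ++ tau) w.2.
have [q hq [z' hz']] := hcov (proj v).
exists q => //.
have hg := proj_glued hz'.
have [u [hu1 hu2]] := share_inc (hg (n + 2)).
have hsv : size (e.1, e.2 ++ tau).2 = n + 2 by rewrite /= size_cat size_mkseq hsz.
have hu2' : incident u (ends (e.1, e.2 ++ tau)) by move: hu1; rewrite -hsv /v prefix_ext0.
have hlu : n < lev u.
  have [s1 s2] := tags_spec e tau; rewrite htg /= in s1 s2.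
  have hse : size e.2 = n by rewrite size_mkseq.
  by case: hu2' => ->; rewrite -hse.
have [ha1 ha2] := shared_agree hu2 hu1 hlu.
rewrite /v /= in ha1; split => //.
have hqn := hn q hq.
apply: (@eq_from_nth _ (w.2 0)); rewrite ?size_mkseq // => i hi.
rewrite nth_mkseq //.
have hin : i < n := leq_trans hi hqn.
have := ha2 i hin.
rewrite /v /= /scat size_cat size_mkseq hi.
have -> : i < n + size tau by lia.
rewrite nth_cat size_mkseq hin nth_mkseq //.
move=> <-; exact: set_nth_default.
Qed.

End Work.

Lemma rearr_id (RS : repl_sys) : expanding RS -> rearrangement (@id (X RS)).
Proof.
move=> HE; split.
  by exists id; split => // U.
exists [seq ((e0, [::]) : edge RS) | e0 <- enum (gE (G0 RS))].
split; last first.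
  move=> e he; exists e; split => //.
split.
- rewrite map_inj_uniq ?enum_uniq //; by move=> a b [].
- move=> x; have [w ->] := X_proj x.
  exists (w.1, [::]); first by apply: map_f; rewrite mem_enum.
  by exists w.2; rewrite ext_nil.
- move=> e e' /mapP [a _ ->] /mapP [b _ ->] hne x [[[z hz] hnb] [[z' hz'] _]].
  apply: hnb; rewrite hz.
  apply: (@boundary_D RS HE (a, [::]) (b, [::]) z z' 0).
  + by rewrite -hz -hz'.
  + by case=> /= E _; apply: hne; rewrite E.
  + by [].
Qed.

Lemma rearr_comp (RS : repl_sys) (f g : X RS -> X RS) : expanding RS ->
  rearrangement f -> rearrangement g -> rearrangement (f \o g).
Proof.
move=> HE [[f' [cf1 cf2 ctf ctf']] [Pf [hPf mf]]] [[g' [cg1 cg2 ctg ctg']] [Pg [hPg mg]]].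
split.
  exists (g' \o f'); split.
  - by move=> x /=; rewrite cf1 cg1.
  - by move=> x /=; rewrite cg2 cf2.
  - by move=> U hU; exact: (ctg _ (ctf _ hU)).
  - by move=> U hU; exact: (ctf' _ (ctg' _ hU)).
have [er0 _] := edge_at HE (rinit RS).
set K := \max_(p <- Pf) size p.2.
have hK : forall p, p \in Pf -> size p.2 <= K.
  by move=> p hp; apply: (@leq_bigmax_seq _ _ xpredT (fun p : edge RS => size p.2)).
set W := [seq val t | t <- enum {: K.-tuple (gE (RG RS))}].
have hW : forall t, t \in W -> size t = K.
  by move=> t /mapP [tt _ ->]; rewrite size_tuple.
have hWin : forall z, mkseq z K \in W.
  move=> z; apply/mapP.
  have hs : size (mkseq z K) == K by rewrite size_mkseq.
  by exists (Tuple hs); rewrite ?mem_enum.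
set Q := [seq ((e.1, e.2 ++ t) : edge RS) | e <- Pg, t <- W].
case: hPg => uPg covg disg.
exists Q; split; first split.
- apply: allpairs_uniq => //.
    by rewrite map_inj_uniq ?enum_uniq //; exact: val_inj.
  move=> [e t] [e' t'] /allpairsP [[x y] [hx hy /= [-> ->]]] /allpairsP [[x' y'] [hx' hy' /= [-> ->]]] /=.
  case=> E1 E2.
  have hs : size x.2 = size x'.2.
    have sy := hW _ hy; have sy' := hW _ hy'; simpl in sy, sy'.
    by move: (f_equal size E2); rewrite !size_cat sy sy'; move/addIn.
  move/eqP: E2; rewrite eqseq_cat // => /andP [/eqP E2 /eqP E3].
  by rewrite E3; congr pair; case: x E1 E2 {hx hy hs} => ? ?; case: x' {hx' hy'} => ? ? /= -> ->.
- move=> x; have [e he [z hz]] := covg x.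
  exists (e.1, e.2 ++ mkseq z K); first exact: allpairs_f.
  by exists (fun i => z (i + K)); rewrite -ext_split.
- move=> e1 e2 /allpairsP [[a t1] [ha ht1 /= ->]] /allpairsP [[b t2] [hb ht2 /= ->]] hne x.
  move=> [[[z1 hz1] hn1] [[z2 hz2] hn2]].
  case: (classic (a = b)) => [Eab|nab].
    subst b; apply: hn1; rewrite hz1.
    apply: (@boundary_D RS HE _ (a.1, a.2 ++ t2) z1 z2 (size a.2 + K)).
    + by rewrite -hz1 -hz2.
    + move=> /prefix_agree.
      have h1 : size a.2 + K = size (a.1, a.2 ++ t1).2 by rewrite /= size_cat (hW _ ht1).
      have h2 : size a.2 + K = size (a.1, a.2 ++ t2).2 by rewrite /= size_cat (hW _ ht2).
      rewrite {1}h1 prefix_ext0 h2 prefix_ext0; exact: hne.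
    + by rewrite /= size_cat (hW _ ht1).
  apply: (disg a b ha hb nab x); split; split.
  + by exists (scat t1 z1); rewrite hz1 ext_cat.
  + by move=> hbd; apply: hn1; rewrite hz1; apply: bd_sub => //; rewrite -hz1.
  + by exists (scat t2 z2); rewrite hz2 ext_cat.
  + by move=> hbd; apply: hn2; rewrite hz2; apply: bd_sub => //; rewrite -hz2.
move=> e1 /allpairsP [[a t] [ha ht /= ->]].
have [a' [hla hma]] := mg a ha.
set e'' : edge RS := (a'.1, a'.2 ++ t).
set w := ext e'' (fun _ => er0).
have [p hp [hp1 hp2]] := PL HE hPf w.
have hpK := hK p hp.
set rho := drop (size p.2) e''.2.
have st : size t = K by have := hW _ ht.
have hle : size p.2 <= size e''.2.
  by rewrite /e'' /= size_cat st; apply: leq_trans hpK (leq_addl _ _).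
have Ee : e'' = (p.1, p.2 ++ rho).
  have hw2 : mkseq w.2 (size e''.2) = e''.2.
    by have := prefix_ext0 e'' (fun _ => er0); rewrite /Defs.prefix; case.
  rewrite /rho hp1 /w /=; congr pair.
  by rewrite hp2 -(@take_mkseq RS w.2 (size p.2) (size e''.2) hle) hw2 size_takel // cat_take_drop.
have [p' [hlp hmp]] := mf p hp.
exists (p'.1, p'.2 ++ rho); split.
  rewrite (loop_transport HE t hla) -/e'' Ee; exact: loop_transport.
move=> zeta /=.
rewrite ext_cat hma -ext_cat -/e'' Ee ext_cat (@ext_cat RS p) hmp.
by [].
Qed.

Lemma pairs_exist (RS : repl_sys) (P : seq (edge RS)) (R : edge RS -> edge RS -> Prop) :
  (forall e, e \in P -> exists e', R e e') ->
  exists l : seq (edge RS * edge RS), map fst l = P /\ forall pr, pr \in l -> R pr.1 pr.2.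
Proof.
elim: P => [|e P IH] h; first by exists [::].
have [e' he'] := h e (mem_head _ _).
have [l [hl hR]] : exists l : seq (edge RS * edge RS), map fst l = P /\ forall pr, pr \in l -> R pr.1 pr.2.
  by apply: IH => x hx; apply: h; rewrite in_cons hx orbT.
exists ((e, e') :: l); split; first by rewrite /= hl.
by move=> pr; rewrite in_cons => /orP [/eqP -> //|]; apply: hR.
Qed.

Lemma fst_uniq_eq (T : eqType) (l : seq (T * T)) pr pr' :
  uniq (map fst l) -> pr \in l -> pr' \in l -> pr.1 = pr'.1 -> pr = pr'.
Proof.
elim: l => [|x l IH] //= /andP [hx hu].
rewrite !in_cons => /orP [/eqP ->|h1] /orP [/eqP ->|h2] E //.
- by move: hx; rewrite E (map_f fst h2).
- by move: hx; rewrite -E (map_f fst h1).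
- exact: IH.
Qed.

Lemma rearr_inv (RS : repl_sys) (f g : X RS -> X RS) : expanding RS ->
  rearrangement f -> cancel f g -> cancel g f -> rearrangement g.
Proof.
move=> HE [[h [cfh chf ctf cth]] [Pf [hPf mf]]] cfg cgf.
have hgh : forall y, g y = h y by move=> y; rewrite -{1}(chf y) cfg.
split.
  exists f; split => //.
  move=> U hU; have -> : (fun x => U (g x)) = (fun x => U (h x)).
    by apply: functional_extensionality => x; rewrite hgh.
  exact: cth.
have [l [hl hR]] := pairs_exist mf.
case: hPf => uPf covf disf.
have ul : uniq (map fst l) by rewrite hl.
exists (undup (map snd l)); split; first split.
- exact: undup_uniq.
- move=> x; have [e he [z hz]] := covf (g x).
  move: he; rewrite -hl => /mapP [pr hpr E]; subst e.
  exists pr.2; first by rewrite mem_undup; apply: map_f.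
  exists z; rewrite -(proj2 (hR _ hpr)) -hz; by rewrite cgf.
- move=> e2 e2'; rewrite !mem_undup => /mapP [pr hpr ->] /mapP [pr' hpr' ->] hne x.
  move=> [[[z1 hz1] hn1] [[z2 hz2] hn2]].
  have hy1 : g x = proj (ext pr.1 z1) by rewrite hz1 -(proj2 (hR _ hpr)) cfg.
  have hy2 : g x = proj (ext pr'.1 z2) by rewrite hz2 -(proj2 (hR _ hpr')) cfg.
  have n1 : pr.1 <> pr'.1.
    by move=> E; apply: hne; rewrite (fst_uniq_eq ul hpr hpr' E).
  have m1 : pr.1 \in Pf by rewrite -hl; apply: map_f.
  have m2 : pr'.1 \in Pf by rewrite -hl; apply: map_f.
  case: (classic (cell_boundary pr.1 (g x))) => hb1.
    apply: hn1; rewrite hz1; apply: (bd_transport HE (proj1 (hR _ hpr))).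
    by rewrite -hy1.
  case: (classic (cell_boundary pr'.1 (g x))) => hb2.
    apply: hn2; rewrite hz2; apply: (bd_transport HE (proj1 (hR _ hpr'))).
    by rewrite -hy2.
  apply: (disf _ _ m1 m2 n1 (g x)); split; split => //.
  + by exists z1.
  + by exists z2.
move=> e2; rewrite mem_undup => /mapP [pr hpr ->].
have [hL hM] := hR _ hpr.
exists pr.1; split; first by split; move=> ?; apply/hL.
by move=> zeta; rewrite -hM cfg.
Qed.

Theorem proposition1p15 (RS : repl_sys) :
  expanding RS ->
  [/\ rearrangement (@id (X RS)),
      (forall f g : X RS -> X RS,
         rearrangement f -> rearrangement g -> rearrangement (f \o g)) &
      (forall f g : X RS -> X RS,
         rearrangement f -> cancel f g -> cancel g f -> rearrangement g)].
Proof.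
move=> HE; split.
- exact: rearr_id.
- by move=> f g; apply: rearr_comp.
- by move=> f g; apply: rearr_inv.
Qed.
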